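(* Let $G=(V,E)$ be a graph with $|V|>4$ and let $v\in V$ be a 1-separator (cut vertex) of $G$. Let $A_1,\ldots,A_\ell$ be the connected components of $G-\{v\}$. Then there is an $i\in\{1,\ldots,\ell\}$ such that $\delta(G)=\delta(G-V(A_i))$.
   Context: For a graph $G=(V,E)$, $\mathrm{dist}(x,y)$ denotes the length of a shortest $x$-$y$ path ($\infty$ if none exists). For $a,b,c,d\in V$ let $D_1=\mathrm{dist}(a,b)+\mathrm{dist}(c,d)$, $D_2=\mathrm{dist}(a,c)+\mathrm{dist}(b,d)$, $D_3=\mathrm{dist}(a,d)+\mathrm{dist}(b,c)$, and define $\delta(a,b,c,d)=|D_i-D_j|$ where $\{i,j,k\}=\{1,2,3\}$ and $D_k\le\min\{D_i,D_j\}$. The hyperbolicity of $G$ is $\delta(G)=\max_{a,b,c,d\in V}\delta(a,b,c,d)$. $G-W$ denotes the graph obtained by deleting the vertices in $W$; a 1-separator is a vertex whose deletion increases the number of connected components. *)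

(* Defs.v *)
From mathcomp Require Import all_boot.
Set Implicit Arguments.
Unset Strict Implicit.
Unset Printing Implicit Defensive.

(* Subgraphs obtained by
   deleting vertices are represented as induced subgraphs on a vertex set
   S : {set T}. *)
Section Graph.
Variables (T : finType) (e : rel T).

Definition simple_graph : Prop := symmetric e /\ irreflexive e.

(* reach S n x y : there is a walk of length exactly n from x to y all of
   whose vertices after x lie in S (x itself is always taken in S below). *)
Fixpoint reach (S : {set T}) (n : nat) (x y : T) : bool :=
  match n with
  | 0 => x == y
  | n'.+1 => [exists z in S, e x z && reach S n' z y]
  end.

Definition connected_in (S : {set T}) (x y : T) : Prop :=
  x \in S /\ y \in S /\ exists n, reach S n x y.

Definition connected_graph (S : {set T}) : Prop :=
  forall x y, x \in S -> y \in S -> exists n, reach S n x y.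

(* Distance in G[S]: the least n with a walk of length n (a shortest walk is
   a shortest path, of length < #|T|).  If there is no walk the value is the
   sentinel #|T|; this never happens for connected G[S]. *)
Definition dist (S : {set T}) (x y : T) : nat :=
  find (fun n => reach S n x y) (iota 0 #|T|).

Definition delta4 (S : {set T}) (a b c d : T) : nat :=
  let D1 := dist S a b + dist S c d in
  let D2 := dist S a c + dist S b d in
  let D3 := dist S a d + dist S b c in
  if D1 <= minn D2 D3 then maxn D2 D3 - minn D2 D3
  else if D2 <= minn D1 D3 then maxn D1 D3 - minn D1 D3
  else maxn D1 D2 - minn D1 D2.

Definition hyperbolicity (S : {set T}) : nat :=
  \max_(a in S) \max_(b in S) \max_(c in S) \max_(d in S) delta4 S a b c d.

Definition component (S : {set T}) (u : T) : {set T} :=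
  [set w in S | [exists n : 'I_#|T|, reach S n u w]].

Definition components (S : {set T}) : {set {set T}} :=
  [set component S u | u in S].

Definition n_components (S : {set T}) : nat := #|components S|.

Definition separator1 (v : T) : bool :=
  n_components [set: T] < n_components [set~ v].

End Graph.

(* Main.v *)
Require Import Defs.
From mathcomp Require Import all_boot zify.
Set Implicit Arguments.
Unset Strict Implicit.
Unset Printing Implicit Defensive.

Section Reach.
Variables (T : finType) (e : rel T).

Lemma reach_cat (S : {set T}) m n x y z :
  reach e S m x y -> reach e S n y z -> reach e S (m + n) x z.
Proof.
elim: m x => [|m IH] x /=; first by move/eqP->.
case/existsP=> w /and3P[wS exw rw] ryz.
apply/existsP; exists w; rewrite wS exw /=; exact: IH.
Qed.

Lemma reach_sub (S S2 : {set T}) n x y : S \subset S2 -> reach e S n x y -> reach e S2 n x y.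
Proof.
move=> sub; elim: n x => [|n IH] x //=.
case/existsP=> w /and3P[wS exw rw]; apply/existsP; exists w.
by rewrite (subsetP sub _ wS) exw IH.
Qed.

Lemma reach_in (S : {set T}) n x y : reach e S n x y -> x \in S -> y \in S.
Proof.
elim: n x => [|n IH] x /=; first by move/eqP->.
by case/existsP=> w /and3P[wS exw rw] _; exact: (IH w rw wS).
Qed.

Lemma reach_rev (S : {set T}) n x y : symmetric e -> x \in S -> reach e S n x y -> reach e S n y x.
Proof.
move=> sym; elim: n x => [|n IH] x /=; first by move=> _ /eqP->.
move=> xS; case/existsP=> w /and3P[wS exw rw].
have h1 : reach e S 1 w x by apply/existsP; exists x; rewrite xS sym exw eqxx.
by have := reach_cat (IH _ wS rw) h1; rewrite addn1.
Qed.

Lemma reach_path (S : {set T}) n x y : reach e S n x y ->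
  exists p, [/\ size p = n, path e x p, last x p = y & all (fun z => z \in S) p].
Proof.
elim: n x => [|n IH] x /=; first by move/eqP->; exists [::].
case/existsP=> w /and3P[wS exw rw]; have [p [sp pp lp ap]] := IH _ rw.
by exists (w :: p); rewrite /= sp exw pp lp wS ap.
Qed.

Lemma path_reach (S : {set T}) x p : path e x p -> all (fun z => z \in S) p ->
  reach e S (size p) x (last x p).
Proof.
elim: p x => [|w p IH] x /=; first by rewrite eqxx.
case/andP=> exw pp /andP[wS ap]; apply/existsP; exists w.
by rewrite wS exw IH.
Qed.

Lemma reach_short (S : {set T}) n x y : reach e S n x y ->
  exists m, [/\ m < #|T|, m <= n & reach e S m x y].
Proof.
case/reach_path=> p [sp pp lp ap]; subst.
case: (shortenP pp) => p' pp' up' sub.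
exists (size p'); split.
- have := card_uniqP up'; have := max_card (mem (x :: p')).
  by move=> h1 h2; rewrite h2 /= in h1.
- by case/andP: up' => _ up'; apply: uniq_leq_size.
- apply: path_reach => //; apply/allP => z /sub zp.
  by move/allP: ap; apply.
Qed.

Lemma dist_le (S : {set T}) n x y : reach e S n x y -> dist e S x y <= n.
Proof.
case/reach_short=> m [mT mn rm]; apply: leq_trans mn.
rewrite leqNgt; apply/negP => /(before_find 0).
by rewrite nth_iota // add0n rm.
Qed.

Lemma dist_reach (S : {set T}) n x y : reach e S n x y -> reach e S (dist e S x y) x y.
Proof.
case/reach_short=> m [mT mn rm].
have h : has (fun n => reach e S n x y) (iota 0 #|T|).
  by apply/hasP; exists m; rewrite // mem_iota.
have := nth_find 0 h; rewrite nth_iota //.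
by rewrite has_find size_iota in h.
Qed.

Lemma comp_memP (S : {set T}) x y :
  reflect (y \in S /\ exists n, reach e S n x y) (y \in component e S x).
Proof.
rewrite inE; apply: (iffP andP) => [[yS /existsP[n rn]]|[yS [n rn]]].
  by split => //; exists n.
split => //; have [m [mT _ rm]] := reach_short rn.
by apply/existsP; exists (Ordinal mT).
Qed.

End Reach.
Section Hyp.
Variables (T : finType) (e : rel T).

Lemma hyp_ge (S : {set T}) a b c d : a \in S -> b \in S -> c \in S -> d \in S ->
  delta4 e S a b c d <= hyperbolicity e S.
Proof.
move=> aS bS cS dS; rewrite /hyperbolicity.
apply: (bigmax_sup a) => //; apply: (bigmax_sup b) => //.
apply: (bigmax_sup c) => //; exact: (bigmax_sup d).
Qed.

Lemma hyp_le (S : {set T}) M :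
  (forall a b c d, a \in S -> b \in S -> c \in S -> d \in S -> delta4 e S a b c d <= M) ->
  hyperbolicity e S <= M.
Proof.
move=> h; apply/bigmax_leqP => a aS; apply/bigmax_leqP => b bS.
apply/bigmax_leqP => c cS; apply/bigmax_leqP => d dS; exact: h.
Qed.

Lemma hyp_arg (S : {set T}) : 0 < #|S| -> exists a b c d,
  [/\ a \in S, b \in S, c \in S, d \in S & hyperbolicity e S = delta4 e S a b c d].
Proof.
move=> h; rewrite /hyperbolicity.
have [a aS ->] := eq_bigmax_cond (fun a => \max_(b in S) \max_(c in S) \max_(d in S) delta4 e S a b c d) h.
have [b bS ->] := eq_bigmax_cond (fun b => \max_(c in S) \max_(d in S) delta4 e S a b c d) h.
have [c cS ->] := eq_bigmax_cond (fun c => \max_(d in S) delta4 e S a b c d) h.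
have [d dS ->] := eq_bigmax_cond (fun d => delta4 e S a b c d) h.
by exists a, b, c, d.
Qed.

End Hyp.

Lemma bool_case (na nb nc nd sab sac sad sbc sbd scd : bool) :
  [&& sab ==> na && nb, sac ==> na && nc, sad ==> na && nd, sbc ==> nb && nc,
      sbd ==> nb && nd, scd ==> nc && nd,
      [&& sab && sbc ==> sac, sab && sac ==> sbc, sac && sbc ==> sab,
          sab && sbd ==> sad, sab && sad ==> sbd, sad && sbd ==> sab,
          sac && scd ==> sad, sac && sad ==> scd & sad && scd ==> sac]
    & [&& sbc && scd ==> sbd, sbc && sbd ==> scd & sbd && scd ==> sbc]] ==>
  [|| [&& na, ~~sab, ~~sac & ~~sad], [&& nb, ~~sab, ~~sbc & ~~sbd],
      [&& nc, ~~sac, ~~sbc & ~~scd], [&& nd, ~~sad, ~~sbd & ~~scd],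
      [&& na && nb ==> sab, na && nc ==> sac, na && nd ==> sad,
          nb && nc ==> sbc, nb && nd ==> sbd & nc && nd ==> scd],
      [&& ~~sac, ~~sad, ~~sbc & ~~sbd], [&& ~~sab, ~~sad, ~~sbc & ~~scd]
    | [&& ~~sab, ~~sac, ~~sbd & ~~scd]].
Proof. by case: na; case: nb; case: nc; case: nd; case: sab; case: sac; case: sad;
  case: sbc; case: sbd; case: scd. Qed.
Section Cut.
Variables (T : finType) (e : rel T) (v : T).
Hypothesis sym : symmetric e.
Hypothesis conn : connected_graph e [set: T].
Local Notation S0 := [set~ v].
Local Notation dT := (dist e [set: T]).

Lemma reachT x y : exists n, reach e [set: T] n x y.
Proof. exact: conn. Qed.

Lemma dist_self (S : {set T}) x : dist e S x x = 0.
Proof. by apply/eqP; rewrite -leqn0; apply: (@dist_le _ _ _ 0) => /=. Qed.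

Lemma dT_reach x y : reach e [set: T] (dT x y) x y.
Proof. by have [n rn] := reachT x y; apply: dist_reach rn. Qed.

Lemma dist_sym x y : dT x y = dT y x.
Proof.
apply/eqP; rewrite eqn_leq; apply/andP; split; apply: dist_le;
  apply: reach_rev => //; exact: dT_reach.
Qed.

Lemma dist_tri x y z : dT x z <= dT x y + dT y z.
Proof. apply: dist_le; apply: reach_cat; exact: dT_reach. Qed.

Lemma decomp n x y : reach e [set: T] n x y ->
  reach e S0 n x y \/ exists k, [/\ k <= n, reach e [set: T] k x v & reach e [set: T] (n - k) v y].
Proof.
elim: n x => [|n IH] x /=; first by left.
case/existsP=> w /and3P[_ exw rw].
have [wv|wnv] := eqVneq w v.
  right; exists 1; split => //; last by rewrite subn1 /= -wv.
  by apply/existsP; exists w; rewrite in_setT exw wv eqxx.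
case: (IH _ rw) => [r|[k [kn r1 r2]]].
  by left; apply/existsP; exists w; rewrite in_setC1 wnv exw r.
right; exists k.+1; split => //.
by apply/existsP; exists w; rewrite in_setT exw.
Qed.

Lemma comp_self (S : {set T}) x : x \in S -> x \in component e S x.
Proof. by move=> xS; apply/comp_memP; split => //; exists 0 => /=. Qed.

Lemma comp_eq (S : {set T}) u y : u \in S -> y \in component e S u ->
  component e S y = component e S u.
Proof.
move=> uS /comp_memP[yS [n rn]]; apply/setP => w.
apply/comp_memP/comp_memP => [[wS [m rm]]|[wS [m rm]]]; split => //.
  by exists (n + m); apply: reach_cat rn rm.
by exists (n + m); apply: reach_cat (reach_rev sym uS rn) rm.
Qed.

Lemma edge_comp (S : {set T}) u z x : x \in S -> e z x -> z \in component e S u ->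
  x \in component e S u.
Proof.
move=> xS ezx /comp_memP[zS [n rn]]; apply/comp_memP; split => //.
exists (n + 1); apply: reach_cat rn _ => /=.
by apply/existsP; exists x; rewrite xS ezx eqxx.
Qed.

Definition same x y :=
  [&& x != v, y != v & component e S0 x == component e S0 y].

Lemma sep x y : ~~ same x y -> dT x y = dT x v + dT v y.
Proof.
have [->|xv] := eqVneq x v; first by rewrite dist_self.
have [->|yv] := eqVneq y v; first by rewrite dist_self addn0.
rewrite /same xv yv /= => ncomp.
apply/eqP; rewrite eqn_leq dist_tri /=.
case: (decomp (dT_reach x y)) => [r|[k [kn r1 r2]]].
  have xS : x \in S0 by rewrite in_setC1.
  have yc : y \in component e S0 x by apply/comp_memP; split; [rewrite in_setC1|exists (dT x y)].
  by rewrite (comp_eq xS yc) eqxx in ncomp.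
have h1 := dist_le r1; have h2 := dist_le r2; lia.
Qed.

Lemma comp_of A : A \in components e S0 -> exists2 u, u \in S0 & A = component e S0 u.
Proof. by case/imsetP=> u uS ->; exists u. Qed.

Lemma iso_walk A : A \in components e S0 -> forall n x y, x \notin A -> y \notin A ->
  reach e [set: T] n x y -> exists m, m <= n /\ reach e ([set: T] :\: A) m x y.
Proof.
move=> /comp_of[u uS ->{A}] n.
elim: n {-2}n (leqnn n) => [|N IH] n.
  by rewrite leqn0 => /eqP-> x y _ _ r; exists 0.
case: n => [|n] nN x y xA yA /=; first by move=> r; exists 0.
case/existsP=> z /and3P[_ exz rz].
case zA: (z \in component e S0 u).
  have xv : x = v.
    apply/eqP; apply/negPn/negP => xv; case/negP: xA.
    by apply: (edge_comp (z := z)) => //; [rewrite in_setC1|rewrite sym].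
  subst x.
  case: (decomp rz) => [r|[k [kn r1 r2]]].
    have zS : z \in S0 by case/comp_memP: zA.
    have yS := reach_in r zS.
    case/negP: yA; move/comp_memP: zA => [_ [j rj]].
    by apply/comp_memP; split => //; exists (j + n); apply: reach_cat rj r.
  have [m [mn rm]] := IH (n - k) ltac:(lia) v y xA yA r2.
  by exists m; split => //; lia.
have [m [mn rm]] := IH n ltac:(lia) z y (negbT zA) yA rz.
exists m.+1; split => //=; apply/existsP; exists z.
by rewrite in_setD in_setT zA exz.
Qed.

Lemma iso A x y : A \in components e S0 -> x \notin A -> y \notin A ->
  dist e ([set: T] :\: A) x y = dT x y.
Proof.
move=> hA xA yA.
have [m [mn rm]] := iso_walk hA xA yA (dT_reach x y).
apply/eqP; rewrite eqn_leq; apply/andP; split.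
  exact: leq_trans (dist_le rm) mn.
apply: dist_le; apply: (@reach_sub _ _ ([set: T] :\: A)); first exact: subsetT.
exact: dist_reach rm.
Qed.

Lemma same_sym x y : same x y = same y x.
Proof. by rewrite /same andbCA (eq_sym (component e S0 x)). Qed.

Lemma same_trans x y z : same x y -> same y z -> same x z.
Proof.
rewrite /same => /and3P[xv _ /eqP->] /and3P[_ zv /eqP->]; by rewrite xv zv eqxx.
Qed.

Lemma notin_comp x y : x != v -> ~~ same x y -> y \notin component e S0 x.
Proof.
move=> xv ns; apply/negP => yc; case/negP: ns.
have xS : x \in S0 by rewrite in_setC1.
have [yS _] := comp_memP _ _ _ _ yc.
by rewrite /same xv -in_setC1 yS (comp_eq xS yc) eqxx.
Qed.

Lemma comp_in x : x != v -> component e S0 x \in components e S0.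
Proof. by move=> xv; apply: imset_f; rewrite in_setC1. Qed.

Lemma v_notin A : A \in components e S0 -> v \notin A.
Proof.
case/comp_of=> u _ ->; apply/negP => /comp_memP[vS _].
by rewrite in_setC1 eqxx in vS.
Qed.

Lemma in_comp_eq A y : A \in components e S0 -> y \in A -> component e S0 y = A.
Proof. by case/comp_of=> u uS -> yc; apply: comp_eq. Qed.

Ltac facts a b c d :=
  have := dist_sym a v; have := dist_sym b v; have := dist_sym c v;
  have := dist_sym d v; have := dist_self [set: T] v;
  have := dist_tri a v b; have := dist_tri a v c; have := dist_tri a v d;
  have := dist_tri b v c; have := dist_tri b v d; have := dist_tri c v d;
  rewrite /delta4 /=; move=> *; (do !case: ifP => ?); lia.

Lemma shift_a a b c d : ~~ same a b -> ~~ same a c -> ~~ same a d ->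
  delta4 e [set: T] v b c d = delta4 e [set: T] a b c d.
Proof. by move=> h1 h2 h3; rewrite /delta4 (sep h1) (sep h2) (sep h3); facts a b c d. Qed.

Lemma shift_b a b c d : ~~ same a b -> ~~ same b c -> ~~ same b d ->
  delta4 e [set: T] a v c d = delta4 e [set: T] a b c d.
Proof. by move=> h1 h2 h3; rewrite /delta4 (sep h1) (sep h2) (sep h3); facts a b c d. Qed.

Lemma shift_c a b c d : ~~ same a c -> ~~ same b c -> ~~ same c d ->
  delta4 e [set: T] a b v d = delta4 e [set: T] a b c d.
Proof. by move=> h1 h2 h3; rewrite /delta4 (sep h1) (sep h2) (sep h3); facts a b c d. Qed.

Lemma shift_d a b c d : ~~ same a d -> ~~ same b d -> ~~ same c d ->
  delta4 e [set: T] a b c v = delta4 e [set: T] a b c d.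
Proof. by move=> h1 h2 h3; rewrite /delta4 (sep h1) (sep h2) (sep h3); facts a b c d. Qed.

Lemma zero1 a b c d : ~~ same a c -> ~~ same a d -> ~~ same b c -> ~~ same b d ->
  delta4 e [set: T] a b c d = 0.
Proof. by move=> h1 h2 h3 h4; rewrite /delta4 (sep h1) (sep h2) (sep h3) (sep h4); facts a b c d. Qed.

Lemma zero2 a b c d : ~~ same a b -> ~~ same a d -> ~~ same b c -> ~~ same c d ->
  delta4 e [set: T] a b c d = 0.
Proof. by move=> h1 h2 h3 h4; rewrite /delta4 (sep h1) (sep h2) (sep h3) (sep h4); facts a b c d. Qed.

Lemma zero3 a b c d : ~~ same a b -> ~~ same a c -> ~~ same b d -> ~~ same c d ->
  delta4 e [set: T] a b c d = 0.
Proof. by move=> h1 h2 h3 h4; rewrite /delta4 (sep h1) (sep h2) (sep h3) (sep h4); facts a b c d. Qed.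

Lemma hyp_up A : A \in components e S0 ->
  hyperbolicity e ([set: T] :\: A) <= hyperbolicity e [set: T].
Proof.
move=> hA; apply: hyp_le => a b c d; rewrite !in_setD !in_setT !andbT => aA bA cA dA.
rewrite /delta4 !(iso hA) //; exact: hyp_ge.
Qed.

Lemma close A a b c d : A \in components e S0 ->
  a \notin A -> b \notin A -> c \notin A -> d \notin A ->
  hyperbolicity e [set: T] = delta4 e [set: T] a b c d ->
  hyperbolicity e [set: T] = hyperbolicity e ([set: T] :\: A).
Proof.
move=> hA aA bA cA dA H; apply/eqP; rewrite eqn_leq hyp_up // andbT H.
have -> : delta4 e [set: T] a b c d = delta4 e ([set: T] :\: A) a b c d.
  by rewrite /delta4 !(iso hA).
by apply: hyp_ge; rewrite in_setD in_setT andbT.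
Qed.
Lemma pick_class (l : seq T) :
  (forall x y, x \in l -> y \in l -> (x != v) && (y != v) ==> same x y) ->
  exists C, forall y, y \in l -> y != v -> component e S0 y = C.
Proof.
move=> h; case: (pickP (fun x => (x \in l) && (x != v))) => [x /andP[xl xv]|none].
  exists (component e S0 x) => y yl yv.
  by have := h y x yl xl; rewrite yv xv /= => /and3P[_ _ /eqP].
by exists set0 => y yl yv; have := none y; rewrite yl yv.
Qed.

Lemma main : 4 < #|T| -> separator1 e v -> exists2 A, A \in components e S0 &
    hyperbolicity e [set: T] = hyperbolicity e ([set: T] :\: A).
Proof.
move=> T4 sepv.
have exA : forall C : {set T}, exists2 A, A \in components e S0 & A != C.
  move=> C; case: (pickP (fun A => (A \in components e S0) && (A != C))) => [A /andP[hA AC]|none].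
    by exists A.
  have: components e S0 \subset [set C].
    apply/subsetP => A hA; rewrite in_set1; have := none A; rewrite hA /=.
    by move/negbFE.
  move/subset_leq_card; rewrite cards1 => h1.
  have h0 : 0 < n_components e [set: T].
    apply/card_gt0P; exists (component e [set: T] v); exact: imset_f (in_setT v).
  move: sepv h0; rewrite /separator1 /n_components => h2 h0; lia.
have hT : 0 < #|[set: T]| by rewrite cardsT; lia.
have [a [b [c [d [_ _ _ _ Hq]]]]] := hyp_arg e hT.
have [H0|Hpos] := eqVneq (hyperbolicity e [set: T]) 0.
  have [A hA _] := exA set0; exists A => //.
  apply/eqP; rewrite eqn_leq hyp_up // andbT H0 //.
have nv : forall x y, same x y ==> (x != v) && (y != v).
  by move=> x y; apply/implyP => /and3P[-> -> _].
have tr1 : forall x y z, same x y && same y z ==> same x z.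
  by move=> x y z; apply/implyP => /andP[]; apply: same_trans.
have tr2 : forall x y z, same x y && same x z ==> same y z.
  by move=> x y z; apply/implyP => /andP[]; rewrite same_sym; apply: same_trans.
have tr3 : forall x y z, same x z && same y z ==> same x y.
  by move=> x y z; apply/implyP => /andP[] h1; rewrite same_sym; apply: same_trans.
have := bool_case (a != v) (b != v) (c != v) (d != v) (same a b) (same a c) (same a d)
  (same b c) (same b d) (same c d).
rewrite !nv (tr1 a b c) (tr2 a b c) (tr3 a b c) (tr1 a b d) (tr2 a b d) (tr3 a b d)
  (tr1 a c d) (tr2 a c d) (tr3 a c d) (tr1 b c d) (tr2 b c d) (tr3 b c d) /=.
case/orP => [I1|/orP[I2|/orP[I3|/orP[I4|/orP[IIa|/orP[Z1|/orP[Z2|Z3]]]]]]].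
- case/and4P: I1 => av nab nac nad.
  exists (component e S0 a); first exact: comp_in av.
  apply: (close (a := v) (b := b) (c := c) (d := d) (comp_in av)).
  + exact: v_notin (comp_in av).
  + exact: notin_comp av nab.
  + exact: notin_comp av nac.
  + exact: notin_comp av nad.
  + by rewrite (shift_a nab nac nad).
- case/and4P: I2 => bv nab nbc nbd.
  exists (component e S0 b); first exact: comp_in bv.
  apply: (close (a := a) (b := v) (c := c) (d := d) (comp_in bv)).
  + by apply: notin_comp bv _; rewrite same_sym.
  + exact: v_notin (comp_in bv).
  + exact: notin_comp bv nbc.
  + exact: notin_comp bv nbd.
  + by rewrite (shift_b nab nbc nbd).
- case/and4P: I3 => cv nac nbc ncd.
  exists (component e S0 c); first exact: comp_in cv.
  apply: (close (a := a) (b := b) (c := v) (d := d) (comp_in cv)).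
  + by apply: notin_comp cv _; rewrite same_sym.
  + by apply: notin_comp cv _; rewrite same_sym.
  + exact: v_notin (comp_in cv).
  + exact: notin_comp cv ncd.
  + by rewrite (shift_c nac nbc ncd).
- case/and4P: I4 => dv nad nbd ncd.
  exists (component e S0 d); first exact: comp_in dv.
  apply: (close (a := a) (b := b) (c := c) (d := v) (comp_in dv)).
  + by apply: notin_comp dv _; rewrite same_sym.
  + by apply: notin_comp dv _; rewrite same_sym.
  + by apply: notin_comp dv _; rewrite same_sym.
  + exact: v_notin (comp_in dv).
  + by rewrite (shift_d nad nbd ncd).
- case/and5P: IIa => hab hac had hbc /andP[hbd hcd].
  have [C hC] : exists C, forall y, y \in [:: a; b; c; d] -> y != v -> component e S0 y = C.
    apply: pick_class => x y; rewrite !inE => /or4P[]/eqP-> /or4P[]/eqP->;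
      first [ by apply/implyP => /andP[xv _]; rewrite /same xv eqxx | done
            | by rewrite same_sym andbC ].
  have [A hA AC] := exA C; exists A => //.
  have nA : forall y, y \in [:: a; b; c; d] -> y \notin A.
    move=> y yq; have [->|yv] := eqVneq y v; first exact: v_notin hA.
    apply/negP => yA; have := in_comp_eq hA yA; rewrite (hC y yq yv) => CA.
    by rewrite CA eqxx in AC.
  by apply: (close hA _ _ _ _ Hq); apply: nA; rewrite !inE eqxx ?orbT.
- case/and4P: Z1 => h1 h2 h3 h4.
  by move: Hpos; rewrite Hq (zero1 h1 h2 h3 h4) eqxx.
- case/and4P: Z2 => h1 h2 h3 h4.
  by move: Hpos; rewrite Hq (zero2 h1 h2 h3 h4) eqxx.
- case/and4P: Z3 => h1 h2 h3 h4.
  by move: Hpos; rewrite Hq (zero3 h1 h2 h3 h4) eqxx.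
Qed.
End Cut.

Theorem lemma3 (T : finType) (e : rel T) (v : T) :
  simple_graph e ->
  connected_graph e [set: T] ->
  4 < #|T| ->
  separator1 e v ->
  exists2 A, A \in components e [set~ v] &
    hyperbolicity e [set: T] = hyperbolicity e ([set: T] :\: A).
Proof.
move=> [sym _] conn T4 sepv; exact: (@main T e v sym conn T4 sepv).
Qed.
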